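(* Let $f\in\mathbb{Z}[x]$ be a cubic polynomial of non-zero discriminant and let $d$ be a square-free integer. There is a constant $C_f$ depending only on $f$ (not on $d$) such that for any two distinct integer points $P=(x,y)\in\mathbb{Z}^2$, $P'=(x',y')\in\mathbb{Z}^2$ on the elliptic curve $E_d: dy^2=f(x)$, \[\hat h(P+P')\le 3\max(\hat h(P),\hat h(P'))+C_f,\] where $\hat h$ is the canonical height on $E_d$ and $+$ is the group law of $E_d$.
   Context: For a point $Q$ of $E_d$, $h_x(Q)=0$ if $Q$ is the point at infinity $O$ (the origin of the group law), and $h_x(Q)=\log\max(|x_0|,|x_1|)$ if $Q=(x,y)$ with $x=x_0/x_1$, $\gcd(x_0,x_1)=1$. The canonical height is $\hat h(Q)=\frac12\lim_{n\to\infty}4^{-n}h_x([2^n]Q)$. *)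

(* Defs.v *)
From HB Require Import structures.
From mathcomp Require Import all_boot all_order all_algebra.
From mathcomp Require Import all_classical all_reals all_analysis.
Set Implicit Arguments. Unset Strict Implicit. Unset Printing Implicit Defensive.
Import Order.TTheory GRing.Theory Num.Theory.
Import numFieldNormedType.Exports.
Local Open Scope ring_scope.

Definition cubic_disc (f : {poly int}) : int :=
  let a := f`_3 in let b := f`_2 in let c := f`_1 in let e := f`_0 in
  b^+2 * c^+2 - 4 * a * c^+3 - 4 * b^+3 * e - 27 * a^+2 * e^+2 + 18 * a * b * c * e.

Definition squarefree_int (d : int) : Prop :=
  d != 0 /\ forall n : nat, (n ^ 2 %| `|d|)%N -> n = 1%N.

(* rational points of E_d : d y^2 = f(x); None is the point at infinity O *)
Definition ecpt := option (rat * rat).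

Definition fQ (f : {poly int}) : {poly rat} := map_poly (fun z : int => z%:~R) f.

Definition on_curve (f : {poly int}) (d : int) (P : ecpt) : Prop :=
  match P with
  | None => True
  | Some (x, y) => d%:~R * y ^+ 2 = (fQ f).[x]
  end.

(* third intersection of the line through (x1,y1) of slope l, reflected;
   x3 is obtained from x1 + x2 + x3 = (d l^2 - a2) / a3 *)
Definition ec_third (f : {poly int}) (d : int) (l x1 y1 x2 : rat) : ecpt :=
  let x3 := (d%:~R * l ^+ 2 - (f`_2)%:~R) / (f`_3)%:~R - x1 - x2 in
  Some (x3, - (l * (x3 - x1) + y1)).

(* chord-tangent group law on E_d with neutral element O (a flex) *)
Definition ec_add (f : {poly int}) (d : int) (P Q : ecpt) : ecpt :=
  match P, Q with
  | None, _ => Q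
  | _, None => P
  | Some (x1, y1), Some (x2, y2) =>
      if x1 == x2 then
        if y1 + y2 == 0 then None
        else ec_third f d (((fQ f)^`()).[x1] / (2 * d%:~R * y1)) x1 y1 x1
      else ec_third f d ((y2 - y1) / (x2 - x1)) x1 y1 x2
  end.

Definition ec_pow2 (f : {poly int}) (d : int) (n : nat) (Q : ecpt) : ecpt :=
  iter n (fun R => ec_add f d R R) Q.

Definition hx {R : realType} (Q : ecpt) : R :=
  match Q with
  | None => 0
  | Some (x, _) => ln ((Num.max `|numq x| (denq x))%:~R)
  end.

Definition hseq {R : realType} (f : {poly int}) (d : int) (Q : ecpt) : R^nat :=
  fun n => (hx (ec_pow2 f d n Q) : R) / 4 ^+ n.

Definition canon_height {R : realType} (f : {poly int}) (d : int) (Q : ecpt) : R :=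
  2^-1 * limn (hseq f d Q).

Definition ipt (x y : int) : ecpt := Some (x%:~R, y%:~R).

(* Main.v *)
Require Import Defs.
From HB Require Import structures.
From mathcomp Require Import all_boot all_order all_algebra.
From mathcomp Require Import all_classical all_reals all_analysis.
From mathcomp Require Import ring lra zify.
Import Order.TTheory GRing.Theory Num.Theory.
Local Open Scope ring_scope.

Set Implicit Arguments. Unset Strict Implicit. Unset Printing Implicit Defensive.
Import numFieldNormedType.Exports.

Definition fh {R : comNzRingType} (a0 a1 a2 a3 p q : R) : R :=
  a3 * p^+3 + a2 * p^+2 * q + a1 * p * q^+2 + a0 * q^+3.
Definition Fh {R : comNzRingType} (a0 a1 a2 a3 p q : R) : R :=
  (3 * a3 * p^+2 + 2 * a2 * p * q + a1 * q^+2)^+2 - (4 * a2 * q + 8 * a3 * p) * fh a0 a1 a2 a3 p q.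
Definition Gh {R : comNzRingType} (a0 a1 a2 a3 p q : R) : R :=
  4 * a3 * q * fh a0 a1 a2 a3 p q.
Definition form3 (c0 c1 c2 c3 p q : int) : int :=
  c0 * q^+3 + c1 * p * q^+2 + c2 * p^+2 * q + c3 * p^+3.
Definition form4 (c0 c1 c2 c3 c4 p q : int) : int :=
  c0 * q^+4 + c1 * p * q^+3 + c2 * p^+2 * q^+2 + c3 * p^+3 * q + c4 * p^+4.
Definition discI (a0 a1 a2 a3 : int) : int :=
  a2^+2 * a1^+2 - 4 * a3 * a1^+3 - 4 * a2^+3 * a0 - 27 * a3^+2 * a0^+2 + 18 * a3 * a2 * a1 * a0.
Definition cF0 (a0 a1 a2 a3 : int) : int := (a1^+2 - 4 * a0 * a2).
Definition cF1 (a0 a1 a2 a3 : int) : int := (- 8 * a0 * a3).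
Definition cF2 (a0 a1 a2 a3 : int) : int := (- 2 * a1 * a3).
Definition cF3 (a0 a1 a2 a3 : int) : int := 0.
Definition cF4 (a0 a1 a2 a3 : int) : int := (a3^+2).
Definition cG0 (a0 a1 a2 a3 : int) : int := (4 * a0 * a3).
Definition cG1 (a0 a1 a2 a3 : int) : int := (4 * a1 * a3).
Definition cG2 (a0 a1 a2 a3 : int) : int := (4 * a2 * a3).
Definition cG3 (a0 a1 a2 a3 : int) : int := (4 * a3^+2).
Definition cG4 (a0 a1 a2 a3 : int) : int := 0.
Definition u1_0 (a0 a1 a2 a3 : int) : int := (4 * a1^+2 * a2^+4 - 32 * a1^+3 * a2^+2 * a3 + 64 * a1^+4 * a3^+2 - 16 * a0 * a2^+5 + 136 * a0 * a1 * a2^+3 * a3 - 288 * a0 * a1^+2 * a2 * a3^+2 - 108 * a0^+2 * a2^+2 * a3^+2 + 432 * a0^+2 * a1 * a3^+3).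
Definition v1_0 (a0 a1 a2 a3 : int) : int := (2 * a1^+3 * a2^+3 - 8 * a1^+4 * a2 * a3 - 8 * a0 * a1 * a2^+4 + 9 * a0 * a1^+2 * a2^+2 * a3 + 108 * a0 * a1^+3 * a3^+2 + 108 * a0^+2 * a2^+3 * a3 - 540 * a0^+2 * a1 * a2 * a3^+2 + 729 * a0^+3 * a3^+3).
Definition u1_1 (a0 a1 a2 a3 : int) : int := (- 8 * a1^+2 * a2^+3 * a3 + 32 * a1^+3 * a2 * a3^+2 + 32 * a0 * a2^+4 * a3 - 144 * a0 * a1 * a2^+2 * a3^+2 + 216 * a0^+2 * a2 * a3^+3).
Definition v1_1 (a0 a1 a2 a3 : int) : int := (- 5 * a1^+3 * a2^+2 * a3 + 20 * a1^+4 * a3^+2 + 20 * a0 * a1 * a2^+3 * a3 - 90 * a0 * a1^+2 * a2 * a3^+2 + 135 * a0^+2 * a1 * a3^+3).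
Definition u1_2 (a0 a1 a2 a3 : int) : int := (- 12 * a1^+2 * a2^+2 * a3^+2 + 48 * a1^+3 * a3^+3 + 48 * a0 * a2^+3 * a3^+2 - 216 * a0 * a1 * a2 * a3^+3 + 324 * a0^+2 * a3^+4).
Definition v1_2 (a0 a1 a2 a3 : int) : int := (- a1^+2 * a2^+3 * a3 + 4 * a1^+3 * a2 * a3^+2 + 4 * a0 * a2^+4 * a3 - 18 * a0 * a1 * a2^+2 * a3^+2 + 27 * a0^+2 * a2 * a3^+3).
Definition u1_3 (a0 a1 a2 a3 : int) : int := 0.
Definition v1_3 (a0 a1 a2 a3 : int) : int := (3 * a1^+2 * a2^+2 * a3^+2 - 12 * a1^+3 * a3^+3 - 12 * a0 * a2^+3 * a3^+2 + 54 * a0 * a1 * a2 * a3^+3 - 81 * a0^+2 * a3^+4).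
Definition u2_0 (a0 a1 a2 a3 : int) : int := (- 12 * a0 * a1^+5 * a2^+2 * a3 + 48 * a0 * a1^+6 * a3^+2 + 96 * a0^+2 * a1^+3 * a2^+3 * a3 - 408 * a0^+2 * a1^+4 * a2 * a3^+2 - 192 * a0^+3 * a1 * a2^+4 * a3 + 768 * a0^+3 * a1^+2 * a2^+2 * a3^+2 + 708 * a0^+3 * a1^+3 * a3^+3 + 384 * a0^+4 * a2^+3 * a3^+2 - 3024 * a0^+4 * a1 * a2 * a3^+3 + 2592 * a0^+5 * a3^+4).
Definition v2_0 (a0 a1 a2 a3 : int) : int := (3 * a1^+7 * a2^+2 - 12 * a1^+8 * a3 - 36 * a0 * a1^+5 * a2^+3 + 150 * a0 * a1^+6 * a2 * a3 + 144 * a0^+2 * a1^+3 * a2^+4 - 600 * a0^+2 * a1^+4 * a2^+2 * a3 - 177 * a0^+2 * a1^+5 * a3^+2 - 192 * a0^+3 * a1 * a2^+5 + 672 * a0^+3 * a1^+2 * a2^+3 * a3 + 1464 * a0^+3 * a1^+3 * a2 * a3^+2 + 384 * a0^+4 * a2^+4 * a3 - 3024 * a0^+4 * a1 * a2^+2 * a3^+2 - 648 * a0^+4 * a1^+2 * a3^+3 + 2592 * a0^+5 * a2 * a3^+3).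
Definition u2_1 (a0 a1 a2 a3 : int) : int := (- 12 * a1^+6 * a2^+2 * a3 + 48 * a1^+7 * a3^+2 + 100 * a0 * a1^+4 * a2^+3 * a3 - 424 * a0 * a1^+5 * a2 * a3^+2 - 224 * a0^+2 * a1^+2 * a2^+4 * a3 + 912 * a0^+2 * a1^+3 * a2^+2 * a3^+2 + 676 * a0^+2 * a1^+4 * a3^+3 + 64 * a0^+3 * a2^+5 * a3 + 64 * a0^+3 * a1 * a2^+3 * a3^+2 - 2988 * a0^+3 * a1^+2 * a2 * a3^+3 + 432 * a0^+4 * a2^+2 * a3^+3 + 2376 * a0^+4 * a1 * a3^+4).
Definition v2_1 (a0 a1 a2 a3 : int) : int := (- a1^+6 * a2^+3 + 4 * a1^+7 * a2 * a3 + 12 * a0 * a1^+4 * a2^+4 - 76 * a0 * a1^+5 * a2^+2 * a3 + 104 * a0 * a1^+6 * a3^+2 - 48 * a0^+2 * a1^+2 * a2^+5 + 416 * a0^+2 * a1^+3 * a2^+3 * a3 - 857 * a0^+2 * a1^+4 * a2 * a3^+2 + 64 * a0^+3 * a2^+6 - 704 * a0^+3 * a1 * a2^+4 * a3 + 1464 * a0^+3 * a1^+2 * a2^+2 * a3^+2 + 1470 * a0^+3 * a1^+3 * a3^+3 + 1200 * a0^+4 * a2^+3 * a3^+2 - 6264 * a0^+4 * a1 * a2 * a3^+3 + 5184 * a0^+5 * a3^+4).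
Definition u2_2 (a0 a1 a2 a3 : int) : int := (- 8 * a1^+5 * a2^+3 * a3 + 32 * a1^+6 * a2 * a3^+2 + 64 * a0 * a1^+3 * a2^+4 * a3 - 268 * a0 * a1^+4 * a2^+2 * a3^+2 - 16 * a0 * a1^+5 * a3^+3 - 128 * a0^+2 * a1 * a2^+5 * a3 + 480 * a0^+2 * a1^+2 * a2^+3 * a3^+2 + 608 * a0^+2 * a1^+3 * a2 * a3^+3 + 320 * a0^+3 * a2^+4 * a3^+2 - 2304 * a0^+3 * a1 * a2^+2 * a3^+3 - 108 * a0^+3 * a1^+2 * a3^+4 + 2160 * a0^+4 * a2 * a3^+4).
Definition v2_2 (a0 a1 a2 a3 : int) : int := (- 5 * a1^+6 * a2^+2 * a3 + 20 * a1^+7 * a3^+2 + 44 * a0 * a1^+4 * a2^+3 * a3 - 186 * a0 * a1^+5 * a2 * a3^+2 - 112 * a0^+2 * a1^+2 * a2^+4 * a3 + 464 * a0^+2 * a1^+3 * a2^+2 * a3^+2 + 263 * a0^+2 * a1^+4 * a3^+3 + 64 * a0^+3 * a2^+5 * a3 - 160 * a0^+3 * a1 * a2^+3 * a3^+2 - 1224 * a0^+3 * a1^+2 * a2 * a3^+3 + 432 * a0^+4 * a2^+2 * a3^+3 + 864 * a0^+4 * a1 * a3^+4).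
Definition u2_3 (a0 a1 a2 a3 : int) : int := (4 * a1^+4 * a2^+4 * a3 - 32 * a1^+5 * a2^+2 * a3^+2 + 64 * a1^+6 * a3^+3 - 32 * a0 * a1^+2 * a2^+5 * a3 + 272 * a0 * a1^+3 * a2^+3 * a3^+2 - 576 * a0 * a1^+4 * a2 * a3^+3 + 64 * a0^+2 * a2^+6 * a3 - 576 * a0^+2 * a1 * a2^+4 * a3^+2 + 1080 * a0^+2 * a1^+2 * a2^+2 * a3^+3 + 864 * a0^+2 * a1^+3 * a3^+4 + 864 * a0^+3 * a2^+3 * a3^+3 - 3888 * a0^+3 * a1 * a2 * a3^+4 + 2916 * a0^+4 * a3^+5).
Definition v2_3 (a0 a1 a2 a3 : int) : int := (2 * a1^+5 * a2^+3 * a3 - 8 * a1^+6 * a2 * a3^+2 - 16 * a0 * a1^+3 * a2^+4 * a3 + 67 * a0 * a1^+4 * a2^+2 * a3^+2 + 4 * a0 * a1^+5 * a3^+3 + 32 * a0^+2 * a1 * a2^+5 * a3 - 120 * a0^+2 * a1^+2 * a2^+3 * a3^+2 - 152 * a0^+2 * a1^+3 * a2 * a3^+3 - 80 * a0^+3 * a2^+4 * a3^+2 + 576 * a0^+3 * a1 * a2^+2 * a3^+3 + 27 * a0^+3 * a1^+2 * a3^+4 - 540 * a0^+4 * a2 * a3^+4).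

Lemma F_form a0 a1 a2 a3 p q : Fh a0 a1 a2 a3 p q =
  form4 (cF0 a0 a1 a2 a3) (cF1 a0 a1 a2 a3) (cF2 a0 a1 a2 a3) (cF3 a0 a1 a2 a3) (cF4 a0 a1 a2 a3) p q.
Proof. rewrite /Fh /fh /form4 /cF0 /cF1 /cF2 /cF3 /cF4; ring. Qed.

Lemma G_form a0 a1 a2 a3 p q : Gh a0 a1 a2 a3 p q =
  form4 (cG0 a0 a1 a2 a3) (cG1 a0 a1 a2 a3) (cG2 a0 a1 a2 a3) (cG3 a0 a1 a2 a3) (cG4 a0 a1 a2 a3) p q.
Proof. rewrite /Gh /fh /form4 /cG0 /cG1 /cG2 /cG3 /cG4; ring. Qed.

Lemma ident1 a0 a1 a2 a3 p q :
  form3 (u1_0 a0 a1 a2 a3) (u1_1 a0 a1 a2 a3) (u1_2 a0 a1 a2 a3) (u1_3 a0 a1 a2 a3) p q * Fh a0 a1 a2 a3 p q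
  + form3 (v1_0 a0 a1 a2 a3) (v1_1 a0 a1 a2 a3) (v1_2 a0 a1 a2 a3) (v1_3 a0 a1 a2 a3) p q * Gh a0 a1 a2 a3 p q
  = 4 * discI a0 a1 a2 a3 ^+ 2 * q ^+ 7.
Proof. rewrite /form3 /Fh /Gh /fh /discI /u1_0 /u1_1 /u1_2 /u1_3 /v1_0 /v1_1 /v1_2 /v1_3; ring. Qed.

Lemma ident2 a0 a1 a2 a3 p q :
  form3 (u2_0 a0 a1 a2 a3) (u2_1 a0 a1 a2 a3) (u2_2 a0 a1 a2 a3) (u2_3 a0 a1 a2 a3) p q * Fh a0 a1 a2 a3 p q
  + form3 (v2_0 a0 a1 a2 a3) (v2_1 a0 a1 a2 a3) (v2_2 a0 a1 a2 a3) (v2_3 a0 a1 a2 a3) p q * Gh a0 a1 a2 a3 p q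
  = 4 * a3 ^+ 3 * discI a0 a1 a2 a3 ^+ 2 * p ^+ 7.
Proof. rewrite /form3 /Fh /Gh /fh /discI /u2_0 /u2_1 /u2_2 /u2_3 /v2_0 /v2_1 /v2_2 /v2_3; ring. Qed.

Lemma term_le (c p q m : int) (i j : nat) : `|p| <= m -> `|q| <= m ->
  `|c * p ^+ i * q ^+ j| <= `|c| * m ^+ (i + j).
Proof.
move=> hp hq; have m0 : 0 <= m by apply: le_trans hq.
rewrite !normrM !normrX exprD -mulrA; apply: ler_wpM2l => //.
apply: ler_pM; rewrite ?exprn_ge0 //; apply: lerXn2r => //; rewrite ?nnegrE //.
Qed.

Lemma form3_le c0 c1 c2 c3 p q m : `|p| <= m -> `|q| <= m ->
  `|form3 c0 c1 c2 c3 p q| <= (`|c0| + `|c1| + `|c2| + `|c3|) * m ^+ 3.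
Proof.
move=> hp hq.
have h0 := term_le c0 0 3 hp hq; rewrite expr0 mulr1 in h0.
have h1 := term_le c1 1 2 hp hq; rewrite expr1 in h1.
have h2 := term_le c2 2 1 hp hq; rewrite expr1 in h2.
have h3 := term_le c3 3 0 hp hq; rewrite expr0 mulr1 in h3.
rewrite /form3 !mulrDl.
apply: le_trans (ler_normD _ _) _; apply: lerD => //.
apply: le_trans (ler_normD _ _) _; apply: lerD => //.
apply: le_trans (ler_normD _ _) _; apply: lerD => //.
Qed.

Lemma form4_le c0 c1 c2 c3 c4 p q m : `|p| <= m -> `|q| <= m ->
  `|form4 c0 c1 c2 c3 c4 p q| <= (`|c0| + `|c1| + `|c2| + `|c3| + `|c4|) * m ^+ 4.
Proof.
move=> hp hq.
have h0 := term_le c0 0 4 hp hq; rewrite expr0 mulr1 in h0.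
have h1 := term_le c1 1 3 hp hq; rewrite expr1 in h1.
have h2 := term_le c2 2 2 hp hq.
have h3 := term_le c3 3 1 hp hq; rewrite expr1 in h3.
have h4 := term_le c4 4 0 hp hq; rewrite expr0 mulr1 in h4.
rewrite /form4 !mulrDl.
apply: le_trans (ler_normD _ _) _; apply: lerD => //.
apply: le_trans (ler_normD _ _) _; apply: lerD => //.
apply: le_trans (ler_normD _ _) _; apply: lerD => //.
apply: le_trans (ler_normD _ _) _; apply: lerD => //.
Qed.

Definition K1 (a0 a1 a2 a3 : int) : int := (`|cF0 a0 a1 a2 a3| + `|cF1 a0 a1 a2 a3| + `|cF2 a0 a1 a2 a3| + `|cF3 a0 a1 a2 a3| + `|cF4 a0 a1 a2 a3|) + (`|cG0 a0 a1 a2 a3| + `|cG1 a0 a1 a2 a3| + `|cG2 a0 a1 a2 a3| + `|cG3 a0 a1 a2 a3| + `|cG4 a0 a1 a2 a3|).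
Definition sU1 (a0 a1 a2 a3 : int) : int := `|u1_0 a0 a1 a2 a3| + `|u1_1 a0 a1 a2 a3| + `|u1_2 a0 a1 a2 a3| + `|u1_3 a0 a1 a2 a3|.
Definition sV1 (a0 a1 a2 a3 : int) : int := `|v1_0 a0 a1 a2 a3| + `|v1_1 a0 a1 a2 a3| + `|v1_2 a0 a1 a2 a3| + `|v1_3 a0 a1 a2 a3|.
Definition sU2 (a0 a1 a2 a3 : int) : int := `|u2_0 a0 a1 a2 a3| + `|u2_1 a0 a1 a2 a3| + `|u2_2 a0 a1 a2 a3| + `|u2_3 a0 a1 a2 a3|.
Definition sV2 (a0 a1 a2 a3 : int) : int := `|v2_0 a0 a1 a2 a3| + `|v2_1 a0 a1 a2 a3| + `|v2_2 a0 a1 a2 a3| + `|v2_3 a0 a1 a2 a3|.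
Definition Sc (a0 a1 a2 a3 : int) : int := sU1 a0 a1 a2 a3 + sV1 a0 a1 a2 a3 + sU2 a0 a1 a2 a3 + sV2 a0 a1 a2 a3.
Definition Tc (a0 a1 a2 a3 : int) : int := 4 * a3 ^+ 3 * discI a0 a1 a2 a3 ^+ 2.
Definition K2 (a0 a1 a2 a3 : int) : int := Sc a0 a1 a2 a3 * `|Tc a0 a1 a2 a3|.

Lemma lin_bound (U V A B sU sV M W : int) : `|U| <= sU * M -> `|V| <= sV * M ->
  `|A| <= W -> `|B| <= W -> `|U * A + V * B| <= (sU + sV) * M * W.
Proof.
move=> hU hV hA hB.
apply: le_trans (ler_normD _ _) _; rewrite !normrM.
have -> : (sU + sV) * M * W = sU * M * W + sV * M * W by ring.
by apply: lerD; apply: ler_pM.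
Qed.

Lemma cancel3 (m X W : int) : 0 < m -> m ^+ 7 <= X * (m ^+ 3 * W) -> m ^+ 4 <= X * W.
Proof.
move=> m0 h; have m3 : 0 < m ^+ 3 by rewrite exprn_gt0.
rewrite -(ler_pM2l m3) -exprD mulrCA; exact: h.
Qed.

Lemma sum4_le (a b c d : int) : 0 <= a -> 0 <= b -> 0 <= c -> 0 <= d ->
  c + d <= a + b + c + d /\ a + b <= a + b + c + d.
Proof. move=> *; split; lra. Qed.

Lemma dbl_height a0 a1 a2 a3 p q n3 d3 k :
  a3 != 0 -> discI a0 a1 a2 a3 != 0 -> coprimez p q -> 0 < q -> 0 < d3 -> k != 0 ->
  Fh a0 a1 a2 a3 p q = k * n3 -> Gh a0 a1 a2 a3 p q = k * d3 ->
  Num.max `|n3| d3 <= K1 a0 a1 a2 a3 * (Num.max `|p| q) ^+ 4 /\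
  (Num.max `|p| q) ^+ 4 <= K2 a0 a1 a2 a3 * Num.max `|n3| d3.
Proof.
move=> ha hd cop q0 d0 k0 eA eB.
set A := Fh a0 a1 a2 a3 p q in eA *; set B := Gh a0 a1 a2 a3 p q in eB *.
set m := Num.max `|p| q.
have hp : `|p| <= m by rewrite /m; lia.
have hq : `|q| <= m by rewrite /m; lia.
have m1 : 1 <= m by rewrite /m; lia.
set H3 := Num.max `|n3| d3.
have k1 : 1 <= `|k| by lia.
have kA : `|A| = `|k| * `|n3| by rewrite eA normrM.
have kB : `|B| = `|k| * d3 by rewrite eB normrM (gtr0_norm d0).
set W := Num.max `|A| `|B|.
have H3W : H3 <= W.
  rewrite /H3 /W kA kB; have : 0 <= `|n3| by []. nia.
have WkH : W <= `|k| * H3.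
  rewrite /W /H3 kA kB; have : 0 <= `|n3| by []. nia.
have WK : W <= K1 a0 a1 a2 a3 * m ^+ 4.
  have hA := form4_le (cF0 a0 a1 a2 a3) (cF1 a0 a1 a2 a3) (cF2 a0 a1 a2 a3) (cF3 a0 a1 a2 a3) (cF4 a0 a1 a2 a3) hp hq.
  have hB := form4_le (cG0 a0 a1 a2 a3) (cG1 a0 a1 a2 a3) (cG2 a0 a1 a2 a3) (cG3 a0 a1 a2 a3) (cG4 a0 a1 a2 a3) hp hq.
  rewrite -F_form -/A in hA; rewrite -G_form -/B in hB.
  have m4p : 0 <= m ^+ 4 by rewrite exprn_ge0 // (le_trans _ m1).
  rewrite /W /K1 ge_max; apply/andP; split.
    apply: le_trans hA _; apply: ler_wpM2r => //; rewrite lerDl.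
    by rewrite !addr_ge0.
  apply: le_trans hB _; apply: ler_wpM2r => //; rewrite lerDr.
  by rewrite !addr_ge0.
split; first exact: le_trans H3W WK.
set U1 := form3 (u1_0 a0 a1 a2 a3) (u1_1 a0 a1 a2 a3) (u1_2 a0 a1 a2 a3) (u1_3 a0 a1 a2 a3) p q.
set V1 := form3 (v1_0 a0 a1 a2 a3) (v1_1 a0 a1 a2 a3) (v1_2 a0 a1 a2 a3) (v1_3 a0 a1 a2 a3) p q.
set U2 := form3 (u2_0 a0 a1 a2 a3) (u2_1 a0 a1 a2 a3) (u2_2 a0 a1 a2 a3) (u2_3 a0 a1 a2 a3) p q.
set V2 := form3 (v2_0 a0 a1 a2 a3) (v2_1 a0 a1 a2 a3) (v2_2 a0 a1 a2 a3) (v2_3 a0 a1 a2 a3) p q.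
have i1 := ident1 a0 a1 a2 a3 p q; rewrite -/U1 -/V1 -/A -/B in i1.
have i2 := ident2 a0 a1 a2 a3 p q; rewrite -/U2 -/V2 -/A -/B in i2.
set T := Tc a0 a1 a2 a3.
have T0 : T != 0 by rewrite /T /Tc !mulf_neq0 ?expf_neq0.
have kT : `|k| <= `|T|.
  have cop7 : coprimez (p ^+ 7) (q ^+ 7) by apply: coprimezXl; apply: coprimezXr.
  case/coprimezP: cop7 => [[u v]] /= euv.
  have eT : T = (u * (U2 * n3 + V2 * d3) + v * a3 ^+ 3 * (U1 * n3 + V1 * d3)) * k.
    rewrite -[T]mulr1 -euv /T /Tc.
    have -> : 4 * a3 ^+ 3 * discI a0 a1 a2 a3 ^+ 2 * (u * p ^+ 7 + v * q ^+ 7)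
      = u * (4 * a3 ^+ 3 * discI a0 a1 a2 a3 ^+ 2 * p ^+ 7) + v * a3 ^+ 3 * (4 * discI a0 a1 a2 a3 ^+ 2 * q ^+ 7) by ring.
    rewrite -i1 -i2 eA eB; ring.
  move: T0; rewrite eT; set r := (_ + _) => T0.
  have r0 : r != 0 by apply: contraNneq T0 => ->; rewrite mul0r.
  rewrite normrM; have r1 : 1 <= `|r| by clear -r0; lia.
  by rewrite -{1}(mul1r `|k|); apply: ler_wpM2r.
have m3 : 0 < m ^+ 3 by rewrite exprn_gt0 // (lt_le_trans _ m1).
have hU1 := form3_le (u1_0 a0 a1 a2 a3) (u1_1 a0 a1 a2 a3) (u1_2 a0 a1 a2 a3) (u1_3 a0 a1 a2 a3) hp hq.
have hV1 := form3_le (v1_0 a0 a1 a2 a3) (v1_1 a0 a1 a2 a3) (v1_2 a0 a1 a2 a3) (v1_3 a0 a1 a2 a3) hp hq.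
have hU2 := form3_le (u2_0 a0 a1 a2 a3) (u2_1 a0 a1 a2 a3) (u2_2 a0 a1 a2 a3) (u2_3 a0 a1 a2 a3) hp hq.
have hV2 := form3_le (v2_0 a0 a1 a2 a3) (v2_1 a0 a1 a2 a3) (v2_2 a0 a1 a2 a3) (v2_3 a0 a1 a2 a3) hp hq.
rewrite -/U1 -/sU1 in hU1. rewrite -/V1 -/sV1 in hV1.
rewrite -/U2 -/sU2 in hU2. rewrite -/V2 -/sV2 in hV2.
have AW : `|A| <= W by rewrite /W le_max lexx.
have BW : `|B| <= W by rewrite /W le_max lexx orbT.
have b1 := lin_bound hU1 hV1 AW BW. rewrite i1 in b1.
have b2 := lin_bound hU2 hV2 AW BW. rewrite i2 in b2.
set dd := discI a0 a1 a2 a3 in b1 b2 hd.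
have dd1 : 1 <= 4 * dd ^+ 2 by clear -hd; nia.
have T1 : 1 <= `|T| by clear -T0; lia.
have q7 : 0 <= q ^+ 7 by rewrite exprn_ge0 // ltW.
have l1 : q ^+ 7 <= (sU1 a0 a1 a2 a3 + sV1 a0 a1 a2 a3) * m ^+ 3 * W.
  apply: le_trans b1; rewrite normrM (ger0_norm q7) -{1}(mul1r (q ^+ 7)).
  by apply: ler_wpM2r => //; apply: le_trans dd1 (ler_norm _).
have l2 : `|p| ^+ 7 <= (sU2 a0 a1 a2 a3 + sV2 a0 a1 a2 a3) * m ^+ 3 * W.
  apply: le_trans b2; rewrite normrM normrX -{1}(mul1r (`|p| ^+ 7)).
  by apply: ler_wpM2r => //; rewrite exprn_ge0.
have W0 : 0 <= W by rewrite /W le_max normr_ge0.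
have mW : 0 <= m ^+ 3 * W by rewrite mulr_ge0 // ltW.
have s1 : 0 <= sU1 a0 a1 a2 a3 by rewrite /sU1 !addr_ge0.
have s2 : 0 <= sV1 a0 a1 a2 a3 by rewrite /sV1 !addr_ge0.
have s3 : 0 <= sU2 a0 a1 a2 a3 by rewrite /sU2 !addr_ge0.
have s4 : 0 <= sV2 a0 a1 a2 a3 by rewrite /sV2 !addr_ge0.
have m7 : m ^+ 7 <= Sc a0 a1 a2 a3 * (m ^+ 3 * W).
  have em : m = `|p| \/ m = q by rewrite /m; clear -q0; lia.
  rewrite /Sc; case: em => em.
    rewrite {1}em; apply: le_trans l2 _; rewrite -mulrA; apply: (ler_wpM2r mW); exact: (sum4_le s1 s2 s3 s4).1.
  rewrite {1}em; apply: le_trans l1 _; rewrite -mulrA; apply: (ler_wpM2r mW); exact: (sum4_le s1 s2 s3 s4).2.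
have m4 : m ^+ 4 <= Sc a0 a1 a2 a3 * W := cancel3 (lt_le_trans ltr01 m1) m7.
apply: le_trans m4 _; rewrite /K2 -mulrA; apply: ler_wpM2l; first by rewrite /Sc !addr_ge0.
apply: le_trans WkH _; apply: ler_wpM2r => //; rewrite /H3 le_max; apply/orP; left; exact: normr_ge0.
Qed.

Lemma form2_le (c0 c1 c2 p q m : int) : `|p| <= m -> `|q| <= m ->
  `|c0 * q^+2 + c1 * p * q + c2 * p^+2| <= (`|c0| + `|c1| + `|c2|) * m ^+ 2.
Proof.
move=> hp hq.
have h0 := term_le c0 0 2 hp hq; rewrite expr0 mulr1 in h0.
have h1 := term_le c1 1 1 hp hq; rewrite !expr1 in h1.
have h2 := term_le c2 2 0 hp hq; rewrite expr0 mulr1 in h2.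
rewrite !mulrDl.
apply: le_trans (ler_normD _ _) _; apply: lerD => //.
apply: le_trans (ler_normD _ _) _; apply: lerD => //.
Qed.

Lemma root_height a0 a1 a2 a3 p q : a3 != 0 -> coprimez p q -> 0 < q ->
  fh a0 a1 a2 a3 p q = 0 ->
  Num.max `|p| q <= (`|a0| + `|a1| + `|a2| + `|a3|) * `|a3|.
Proof.
move=> ha cop q0 hf.
have e : a3 * p ^+ 3 = q * (- (a0 * q^+2 + a1 * p * q + a2 * p^+2)).
  by apply/eqP; rewrite -subr_eq0 -[X in _ == X]hf /fh; apply/eqP; ring.
have qa : (q %| a3)%Z.
  have : (q %| a3 * p ^+ 3)%Z by rewrite e dvdz_mulr.
  rewrite Gauss_dvdzl //; apply: coprimezXr; by rewrite coprimez_sym.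
have qle : q <= `|a3|.
  case/dvdzP: qa => r er; rewrite er normrM (gtr0_norm q0).
  have : r != 0 by apply: contraNneq ha => r0; rewrite er r0 mul0r.
  clear -q0; nia.
have a31 : 1 <= `|a3| by clear -ha; lia.
have S0 : 0 <= `|a0| + `|a1| + `|a2| by rewrite !addr_ge0.
case: (leP `|p| q) => hpq.
  have : q <= (`|a0| + `|a1| + `|a2| + `|a3|) * `|a3| by clear -qle S0 a31; nia.
  by clear -hpq q0; lia.
set P := `|p|.
have P0 : 0 < P by apply: le_lt_trans hpq; exact: ltW.
have hqP : `|q| <= P by rewrite (gtr0_norm q0); exact: ltW.
have hb := form2_le a0 a1 a2 (lexx P) hqP.
have h : `|a3| * P ^+ 3 <= q * ((`|a0| + `|a1| + `|a2|) * P ^+ 2).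
  have := congr1 Num.norm e; rewrite normrM normrX normrM normrN (gtr0_norm q0) => ->.
  by apply: ler_wpM2l => //; exact: ltW.
have h' : `|a3| * P <= q * (`|a0| + `|a1| + `|a2|).
  have P2 : 0 < P ^+ 2 by rewrite exprn_gt0.
  rewrite -(ler_pM2r P2) -!mulrA -exprS; exact: h.
have : P <= (`|a0| + `|a1| + `|a2| + `|a3|) * `|a3|.
  clear -h' P0 q0 qle S0 a31; nia.
by clear -hpq; lia.
Qed.

Lemma evalQ (f : {poly int}) (sf : size f = 4%N) (x : rat) : (fQ f).[x] =
  (f`_3)%:~R * x^+3 + (f`_2)%:~R * x^+2 + (f`_1)%:~R * x + (f`_0)%:~R.
Proof.
rewrite (@horner_coef_wide _ 4); last by rewrite /fQ size_map_inj_poly ?sf //; exact: intr_inj.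
rewrite !big_ord_recr big_ord0 /= /fQ !coef_map /=.
move: ((f`_0)%:~R : rat) ((f`_1)%:~R : rat) ((f`_2)%:~R : rat) ((f`_3)%:~R : rat) => c0 c1 c2 c3.
ring.
Qed.

Lemma evalQ' (f : {poly int}) (sf : size f = 4%N) (x : rat) : ((fQ f)^`()).[x] =
  3 * (f`_3)%:~R * x^+2 + 2 * (f`_2)%:~R * x + (f`_1)%:~R.
Proof.
rewrite (@horner_coef_wide _ 3); last first.
  have s4 : size (fQ f) = 4%N by rewrite /fQ size_map_inj_poly ?sf //; exact: intr_inj.
  rewrite -ltnS -s4; apply: lt_size_deriv; by rewrite -size_poly_eq0 s4.
rewrite !big_ord_recr big_ord0 /= !coef_deriv /fQ !coef_map /=.
move: ((f`_0)%:~R : rat) ((f`_1)%:~R : rat) ((f`_2)%:~R : rat) ((f`_3)%:~R : rat) => c0 c1 c2 c3.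
ring.
Qed.

Lemma evalZ (f : {poly int}) (sf : size f = 4%N) (x : int) :
  f.[x] = f`_3 * x^+3 + f`_2 * x^+2 + f`_1 * x + f`_0.
Proof.
rewrite (@horner_coef_wide _ 4) ?sf //.
rewrite !big_ord_recr big_ord0 /=.
move: (f`_0) (f`_1) (f`_2) (f`_3) => c0 c1 c2 c3.
by rewrite expr0 expr1 mulr1 add0r; ring.
Qed.

Definition gfun (c0 c1 c2 c3 D l x1 y1 X : rat) :=
  c3 * X^+3 + c2 * X^+2 + c1 * X + c0 - D * (l * (X - x1) + y1)^+2.

Lemma ident_tan c0 c1 c2 c3 D l x1 y1 X :
  gfun c0 c1 c2 c3 D l x1 y1 X - gfun c0 c1 c2 c3 D l x1 y1 x1
    - (3 * c3 * x1^+2 + 2 * c2 * x1 + c1 - 2 * D * l * y1) * (X - x1)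
  = (X - x1)^+2 * (c3 * X + 2 * c3 * x1 + c2 - D * l^+2).
Proof. rewrite /gfun; ring. Qed.

Lemma ident_chord c0 c1 c2 c3 D l x1 y1 x2 X :
  gfun c0 c1 c2 c3 D l x1 y1 X * (x1 - x2) - gfun c0 c1 c2 c3 D l x1 y1 x1 * (X - x2)
    + gfun c0 c1 c2 c3 D l x1 y1 x2 * (X - x1)
  = (x1 - x2) * (X - x1) * (X - x2) * (c3 * X + c3 * (x1 + x2) + c2 - D * l^+2).
Proof. rewrite /gfun; ring. Qed.

Lemma third_alg (c0 c1 c2 c3 D l x1 y1 x2 : rat) : c3 != 0 ->
  gfun c0 c1 c2 c3 D l x1 y1 x1 = 0 ->
  (x1 == x2 -> 3 * c3 * x1^+2 + 2 * c2 * x1 + c1 - 2 * D * l * y1 = 0) ->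
  (x1 != x2 -> gfun c0 c1 c2 c3 D l x1 y1 x2 = 0) ->
  D * (- (l * (((D * l^+2 - c2) / c3 - x1 - x2) - x1) + y1)) ^+ 2 =
  c3 * ((D * l^+2 - c2) / c3 - x1 - x2) ^+ 3 + c2 * ((D * l^+2 - c2) / c3 - x1 - x2) ^+ 2
  + c1 * ((D * l^+2 - c2) / c3 - x1 - x2) + c0.
Proof.
move=> c30 h1 ht hc.
set X := (_ / _ - x1 - x2).
have hX : c3 * X + c3 * (x1 + x2) + c2 - D * l^+2 = 0.
  by rewrite /X; field.
apply/eqP; rewrite -subr_eq0; apply/eqP.
have -> : D * (- (l * (X - x1) + y1)) ^+ 2 - (c3 * X ^+ 3 + c2 * X ^+ 2 + c1 * X + c0)
   = - gfun c0 c1 c2 c3 D l x1 y1 X by rewrite /gfun; ring.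
apply/eqP; rewrite oppr_eq0; apply/eqP.
case: (eqVneq x1 x2) => [e|ne].
  have := ident_tan c0 c1 c2 c3 D l x1 y1 X; rewrite h1 ht ?e // -e.
  have -> : c3 * X + 2 * c3 * x1 + c2 - D * l ^+ 2 = 0 by rewrite -hX -e; ring.
  by rewrite mulr0 mul0r !subr0.
have := ident_chord c0 c1 c2 c3 D l x1 y1 x2 X.
rewrite h1 hc // hX mulr0 !mul0r subr0 addr0 => /eqP.
have nz : x1 - x2 != 0 by rewrite subr_eq0.
by rewrite mulf_eq0 (negbTE nz) orbF => /eqP.
Qed.

Lemma on_third (f : {poly int}) (d : int) l x1 y1 x2 : size f = 4%N -> f`_3 != 0 ->
  let c0 := (f`_0)%:~R in let c1 := (f`_1)%:~R in
  let c2 := (f`_2)%:~R in let c3 := (f`_3)%:~R in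
  gfun c0 c1 c2 c3 d%:~R l x1 y1 x1 = 0 ->
  (x1 == x2 -> 3 * c3 * x1^+2 + 2 * c2 * x1 + c1 - 2 * d%:~R * l * y1 = 0) ->
  (x1 != x2 -> gfun c0 c1 c2 c3 d%:~R l x1 y1 x2 = 0) ->
  on_curve f d (ec_third f d l x1 y1 x2).
Proof.
move=> sf a30 c0 c1 c2 c3 h1 ht hc; rewrite /ec_third /on_curve evalQ //.
by apply: third_alg => //; rewrite /c3 intr_eq0.
Qed.

Lemma tan_alg (F D y : rat) : D != 0 -> y != 0 -> F - 2 * D * (F / (2 * D * y)) * y = 0.
Proof. by move=> D0 y0; field; rewrite D0 y0. Qed.

Lemma chord_alg (x1 y1 x2 y2 : rat) : x1 != x2 -> (y2 - y1) / (x2 - x1) * (x2 - x1) + y1 = y2.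
Proof. by move=> ne; field; rewrite subr_eq0 eq_sym ne. Qed.

Lemma on_add (f : {poly int}) (d : int) P Q : size f = 4%N -> f`_3 != 0 -> d != 0 ->
  on_curve f d P -> on_curve f d Q -> on_curve f d (ec_add f d P Q).
Proof.
move=> sf a30 d0.
have D0 : d%:~R != 0 :> rat by rewrite intr_eq0.
case: P => [[x1 y1]|] //; case: Q => [[x2 y2]|] //= h1 h2.
have g1 l : gfun (f`_0)%:~R (f`_1)%:~R (f`_2)%:~R (f`_3)%:~R d%:~R l x1 y1 x1 = 0.
  by rewrite /gfun subrr mulr0 add0r -evalQ // -h1 subrr.
case: ifP => [/eqP e|ne].
  case: ifP => // hy.
  have hy0 : y1 != 0.
    apply: contraFN hy => /eqP y10; rewrite y10 in h1 *.
    have : d%:~R * y2 ^+ 2 = d%:~R * 0 ^+ 2 :> rat.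
      by rewrite h2 -e -h1.
    move/eqP; rewrite expr0n /= mulr0 mulf_eq0 (negbTE D0) /= sqrf_eq0 => /eqP ->.
    by rewrite addr0.
  apply: on_third => // _.
  rewrite evalQ' //; exact: tan_alg.
apply: on_third => //; first by move=> h; rewrite h in ne.
move=> _; rewrite /gfun -evalQ // chord_alg ?ne //.
by rewrite h2 subrr.
Qed.

Lemma quot (A B : int) : B != 0 -> exists k : int, [/\ k != 0,
  A = k * numq (A%:~R / B%:~R : rat) & B = k * denq (A%:~R / B%:~R : rat)].
Proof.
move=> B0; set x : rat := A%:~R / B%:~R.
have e : A * denq x = numq x * B.
  apply: (@intr_inj rat); rewrite !rmorphM /=.
  have ex := divq_num_den x.
  have dq : (denq x)%:~R != 0 :> rat by rewrite intr_eq0 denq_neq0.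
  have B0' : B%:~R != 0 :> rat by rewrite intr_eq0.
  have hA : A%:~R = x * B%:~R :> rat by rewrite /x divfK.
  have hn : (numq x)%:~R = x * (denq x)%:~R :> rat by rewrite -{2}ex divfK.
  rewrite hA hn; ring.
have : (denq x %| B)%Z.
  have : (denq x %| numq x * B)%Z by rewrite -e dvdz_mull.
  rewrite mulrC Gauss_dvdzl //.
  by rewrite coprimez_sym coprimezE; exact: coprime_num_den.
case/dvdzP => k ek; exists k; split.
- by apply: contraNneq B0 => k0; rewrite ek k0 mul0r.
- apply: (@mulIf _ (denq x)); first by rewrite denq_neq0.
  by rewrite e ek; ring.
- by [].
Qed.

Lemma dbl_alg (c0 c1 c2 c3 D X Qq y : rat) : c3 != 0 -> D != 0 -> Qq != 0 -> y != 0 ->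
  D * y^+2 = c3 * (X/Qq)^+3 + c2 * (X/Qq)^+2 + c1 * (X/Qq) + c0 ->
  Gh c0 c1 c2 c3 X Qq != 0 /\
  (D * ((3 * c3 * (X/Qq)^+2 + 2 * c2 * (X/Qq) + c1) / (2 * D * y))^+2 - c2) / c3 - X/Qq - X/Qq
   = Fh c0 c1 c2 c3 X Qq / Gh c0 c1 c2 c3 X Qq.
Proof.
move=> c30 D0 Q0 y0 hc.
have efh : fh c0 c1 c2 c3 X Qq = Qq^+3 * (D * y^+2).
  by rewrite hc /fh; field.
have Dy : D * y^+2 != 0 by rewrite mulf_neq0 // expf_neq0.
have fh0 : fh c0 c1 c2 c3 X Qq != 0 by rewrite efh mulf_neq0 // expf_neq0.
have G0 : Gh c0 c1 c2 c3 X Qq != 0.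
  by rewrite /Gh !mulf_neq0.
split => //.
set F' := 3 * c3 * (X/Qq)^+2 + 2 * c2 * (X/Qq) + c1.
have e1 : D * (F' / (2 * D * y))^+2 = F'^+2 / (4 * (D * y^+2)).
  by field; rewrite D0 y0.
rewrite e1.
move: G0; rewrite /Gh /Fh efh => G0.
rewrite /F'; move: Dy; rewrite hc => Dy.
field.
rewrite Q0 c30 andbT /= -exprSr.
by move: fh0; rewrite /fh.
Qed.

Lemma fh_intr (a0 a1 a2 a3 p q : int) :
  (fh a0 a1 a2 a3 p q)%:~R = fh a0%:~R a1%:~R a2%:~R a3%:~R p%:~R q%:~R :> rat.
Proof. by rewrite /fh !(rmorphB, rmorphD, rmorphM, rmorphXn). Qed.
Lemma Fh_intr (a0 a1 a2 a3 p q : int) :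
  (Fh a0 a1 a2 a3 p q)%:~R = Fh a0%:~R a1%:~R a2%:~R a3%:~R p%:~R q%:~R :> rat.
Proof. by rewrite /Fh -fh_intr !(rmorphB, rmorphD, rmorphM, rmorphXn, rmorph_nat). Qed.
Lemma Gh_intr (a0 a1 a2 a3 p q : int) :
  (Gh a0 a1 a2 a3 p q)%:~R = Gh a0%:~R a1%:~R a2%:~R a3%:~R p%:~R q%:~R :> rat.
Proof. by rewrite /Gh -fh_intr !(rmorphB, rmorphD, rmorphM, rmorphXn, rmorph_nat). Qed.

Lemma dbl_x (f : {poly int}) (d : int) (x y : rat) : size f = 4%N -> f`_3 != 0 -> d != 0 ->
  on_curve f d (Some (x, y)) -> y != 0 ->
  Gh f`_0 f`_1 f`_2 f`_3 (numq x) (denq x) != 0 /\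
  exists y', ec_add f d (Some (x, y)) (Some (x, y)) =
    Some ((Fh f`_0 f`_1 f`_2 f`_3 (numq x) (denq x))%:~R /
          (Gh f`_0 f`_1 f`_2 f`_3 (numq x) (denq x))%:~R, y').
Proof.
move=> sf a30 d0 hc y0.
have yy : (y + y == 0) = false.
  by apply/negbTE; rewrite -mulr2n -mulr_natr mulf_neq0.
rewrite /on_curve evalQ // in hc.
have ex : x = (numq x)%:~R / (denq x)%:~R := esym (divq_num_den x).
have c30 : (f`_3)%:~R != 0 :> rat by rewrite intr_eq0.
have D0 : d%:~R != 0 :> rat by rewrite intr_eq0.
have Q0 : (denq x)%:~R != 0 :> rat by rewrite intr_eq0 denq_neq0.
have hc' : d%:~R * y ^+ 2 = (f`_3)%:~R * ((numq x)%:~R / (denq x)%:~R) ^+ 3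
   + (f`_2)%:~R * ((numq x)%:~R / (denq x)%:~R) ^+ 2 + (f`_1)%:~R * ((numq x)%:~R / (denq x)%:~R)
   + (f`_0)%:~R :> rat by rewrite -ex.
have [G0 E] := dbl_alg c30 D0 Q0 y0 hc'.
split; first by rewrite -(intr_eq0 rat) Gh_intr.
rewrite /ec_add eqxx yy /ec_third evalQ'  //.
eexists; congr Some; congr pair.
rewrite Fh_intr Gh_intr -E.
by rewrite -ex.
Qed.

Lemma root_int (f : {poly int}) (x : rat) : size f = 4%N -> (fQ f).[x] = 0 ->
  fh f`_0 f`_1 f`_2 f`_3 (numq x) (denq x) = 0.
Proof.
move=> sf; rewrite evalQ // => h.
apply: (@intr_inj rat); rewrite fh_intr /=.
have Q0 : (denq x)%:~R != 0 :> rat by rewrite intr_eq0 denq_neq0.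
have ex : x = (numq x)%:~R / (denq x)%:~R := esym (divq_num_den x).
have -> : fh (f`_0)%:~R (f`_1)%:~R (f`_2)%:~R (f`_3)%:~R (numq x)%:~R (denq x)%:~R
  = (denq x)%:~R ^+ 3 * ((f`_3)%:~R * x ^+ 3 + (f`_2)%:~R * x ^+ 2 + (f`_1)%:~R * x + (f`_0)%:~R) :> rat.
  move: Q0 ex; set X := ((numq x)%:~R : rat); set Qq := ((denq x)%:~R : rat) => Q0 ex.
  rewrite ex /fh; clearbody X Qq.
  move: ((f`_0)%:~R : rat) ((f`_1)%:~R : rat) ((f`_2)%:~R : rat) ((f`_3)%:~R : rat) => c0 c1 c2 c3.
  by field.
by rewrite h mulr0.
Qed.

Section SeqSec.
Local Open Scope classical_set_scope.

Lemma seq_lim (R : realType) (a : nat -> R) (c : R) :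
  (forall n, 0 <= a n) -> (forall n, a n.+1 - 4 * a n <= c) ->
  (forall n, 4 * a n - a n.+1 <= c) ->
  a 0 - c / 3 <= limn (fun n => a n / 4 ^+ n) <= a 0 + c / 3.
Proof.
move=> a0 h1 h2.
have c0 : 0 <= c by have := h1 0%N; have := h2 0%N; lra.
pose b := fun n => a n / 4 ^+ n.
pose u := fun n => b n + c / 3 / 4 ^+ n.
pose v := fun n => b n - c / 3 / 4 ^+ n.
have p4 n : 0 < (4 : R) ^+ n by apply: exprn_gt0.
have uS n : u n.+1 <= u n.
  rewrite -subr_ge0.
  have -> : u n - u n.+1 = (c - (a n.+1 - 4 * a n)) / 4 ^+ n.+1.
    by rewrite /u /b exprS; field; rewrite expf_neq0.
  by apply: divr_ge0; [rewrite subr_ge0 | exact: ltW].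
have vS n : v n <= v n.+1.
  rewrite -subr_ge0.
  have -> : v n.+1 - v n = (c - (4 * a n - a n.+1)) / 4 ^+ n.+1.
    by rewrite /v /b exprS; field; rewrite expf_neq0.
  by apply: divr_ge0; [rewrite subr_ge0 | exact: ltW].
have bge n : 0 <= b n by apply: divr_ge0 => //; exact: ltW.
have wge n : 0 <= c / 3 / 4 ^+ n by apply: divr_ge0; [lra|exact: ltW].
have uni : {homo u : n m / (n <= m)%N >-> m <= n} by apply/nonincreasing_seqP.
have vnd : {homo v : n m / (n <= m)%N >-> n <= m} by apply/nondecreasing_seqP.
have ub n : b n <= u 0%N.
  apply: (@le_trans _ _ (u n)); last exact: uni.
  by rewrite /u lerDl.
have lb n : v 0%N <= b n.
  apply: (@le_trans _ _ (v n)); first exact: vnd.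
  by rewrite /v lerBlDr lerDl.
have cu : cvgn u.
  apply/cvg_ex; eexists; apply: nonincreasing_cvgn => //.
  by exists 0 => _ [n _ <-]; rewrite /u addr_ge0.
have cv : cvgn v.
  apply/cvg_ex; eexists; apply: nondecreasing_cvgn => //.
  exists (u 0%N) => _ [n _ <-]; apply: (@le_trans _ _ (b n)) => //.
  by rewrite /v lerBlDr lerDl.
have cb : cvgn b.
  have -> : b = ((u + v) \* (fun=> 2^-1)).
    apply: funext => n /=.
    by have -> : (u + v) n = u n + v n by []; rewrite /u /v; field.
  exact: (is_cvgM (is_cvgD cu cv) (is_cvg_cst (2^-1 : R))).
apply/andP; split.
  have -> : a 0%N - c / 3 = v 0%N by rewrite /v /b expr0 !divr1.
  by apply: limr_ge => //; apply: nearW.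
have -> : a 0%N + c / 3 = u 0%N by rewrite /u /b expr0 !divr1.
by apply: limr_le => //; apply: nearW.
Qed.

End SeqSec.

Lemma ln_ge0i (R : realType) (X : int) : 1 <= X -> 0 <= ln (X%:~R : R).
Proof. by move=> h; apply: ln_ge0; rewrite ler1z. Qed.

Lemma lnle (R : realType) (X Y K : int) : 1 <= X -> 1 <= Y -> X <= K * Y ->
  ln (X%:~R : R) <= ln ((Num.max 1 K)%:~R : R) + ln (Y%:~R : R).
Proof.
move=> X1 Y1 h.
have h' : X <= Num.max 1 K * Y.
  apply: le_trans h _; apply: ler_wpM2r; [lia | by rewrite le_max lexx orbT].
have M1 : 1 <= Num.max 1 K by rewrite le_max lexx.
rewrite -lnM ?posrE ?ltr0z; [|lia|lia].
rewrite -intrM ler_ln ?posrE ?ltr0z ?ler_int //.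
by apply: mulr_gt0; lia.
Qed.

Lemma lnXi (R : realType) (m : int) (n : nat) : 1 <= m ->
  ln ((m ^+ n)%:~R : R) = n%:R * ln (m%:~R : R).
Proof. move=> m1; rewrite rmorphXn lnXn ?mulr_natl // ltr0z; lia. Qed.

Definition RB (a0 a1 a2 a3 : int) : int := (`|a0| + `|a1| + `|a2| + `|a3|) * `|a3|.

Definition cstf (R : realType) (f : {poly int}) : R :=
  ln ((Num.max 1 (K1 f`_0 f`_1 f`_2 f`_3))%:~R) + ln ((Num.max 1 (K2 f`_0 f`_1 f`_2 f`_3))%:~R)
  + 4 * ln ((Num.max 1 (RB f`_0 f`_1 f`_2 f`_3))%:~R).

Lemma lnmax_ge0 (R : realType) (K : int) : 0 <= ln ((Num.max 1 K)%:~R : R).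
Proof. by apply: ln_ge0i; rewrite le_max lexx. Qed.

Lemma a3_neq0 (f : {poly int}) : size f = 4%N -> f`_3 != 0.
Proof.
move=> sf; have : lead_coef f != 0 by rewrite lead_coef_eq0 -size_poly_eq0 sf.
by rewrite lead_coefE sf.
Qed.

Lemma Hq_ge1 (x : rat) : 1 <= Num.max `|numq x| (denq x).
Proof. have := denq_gt0 x; rewrite le_max => h; apply/orP; right; lia. Qed.

Lemma step (R : realType) (f : {poly int}) (d : int) (Q : ecpt) :
  size f = 4%N -> cubic_disc f != 0 -> d != 0 -> on_curve f d Q ->
  (hx (ec_add f d Q Q) : R) - 4 * hx Q <= cstf R f /\
  4 * hx Q - (hx (ec_add f d Q Q) : R) <= cstf R f.
Proof.
move=> sf hd d0 hc.
have a30 := a3_neq0 sf.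
have L1 := lnmax_ge0 R (K1 f`_0 f`_1 f`_2 f`_3).
have L2 := lnmax_ge0 R (K2 f`_0 f`_1 f`_2 f`_3).
have L3 := lnmax_ge0 R (RB f`_0 f`_1 f`_2 f`_3).
have c0 : 0 <= cstf R f by rewrite /cstf; lra.
case: Q hc => [[x y]|] hc; last by rewrite /=; split; lra.
set p := numq x; set q := denq x.
have q0 : 0 < q := denq_gt0 x.
have cop : coprimez p q by rewrite coprimezE; exact: coprime_num_den.
have Hx1 := Hq_ge1 x.
have lnx0 := ln_ge0i R Hx1.
case: (eqVneq y 0) => [y0|y0].
  have -> : ec_add f d (Some (x, y)) (Some (x, y)) = None by rewrite /= eqxx y0 addr0 eqxx.
  have hroot : (fQ f).[x] = 0 by move: hc; rewrite /on_curve y0 expr0n mulr0.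
  have := root_height a30 cop q0 (root_int sf hroot); rewrite -/(RB _ _ _ _) => hb.
  have hl : ln ((Num.max `|p| q)%:~R : R) <= ln ((Num.max 1 (RB f`_0 f`_1 f`_2 f`_3))%:~R).
    have := lnle R Hx1 (lexx 1) (_ : _ <= RB f`_0 f`_1 f`_2 f`_3 * 1).
    by rewrite mulr1 ln1 addr0; apply.
  rewrite /hx -/p -/q; split; rewrite /cstf; lra.
have [G0 [y' ->]] := dbl_x sf a30 d0 hc y0.
rewrite -/p -/q in G0 *.
set A := Fh _ _ _ _ p q in G0 *; set B := Gh _ _ _ _ p q in G0 *.
have [k [k0 eA eB]] := @quot A B G0.
set x3 := (A%:~R / B%:~R : rat) in eA eB *.
have [hu hl] := dbl_height a30 hd cop q0 (denq_gt0 x3) k0 eA eB.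
have H31 := Hq_ge1 x3.
have m1 : 1 <= Num.max `|p| q by exact: Hx1.
have m41 : 1 <= (Num.max `|p| q) ^+ 4 by rewrite exprn_ege1.
have up := lnle R H31 m41 hu.
have lo := lnle R m41 H31 hl.
rewrite lnXi // in up lo.
rewrite /hx; split; rewrite /cstf; lra.
Qed.

Lemma hx_ge0 (R : realType) (Q : ecpt) : 0 <= (hx Q : R).
Proof. by case: Q => [[x y]|] /=; [apply: ln_ge0i; exact: Hq_ge1 | ]. Qed.

Lemma ch_bounds (R : realType) (f : {poly int}) (d : int) (Q : ecpt) :
  size f = 4%N -> cubic_disc f != 0 -> d != 0 -> on_curve f d Q ->
  (hx Q : R) / 2 - cstf R f / 6 <= canon_height f d Q /\
  canon_height f d Q <= (hx Q : R) / 2 + cstf R f / 6.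
Proof.
move=> sf hd d0 hc.
have a30 := a3_neq0 sf.
have onp n : on_curve f d (ec_pow2 f d n Q).
  elim: n => [|n IH] //=; exact: on_add.
have := @seq_lim R (fun n => hx (ec_pow2 f d n Q)) (cstf R f)
  (fun n => hx_ge0 R _) (fun n => (step R sf hd d0 (onp n)).1) (fun n => (step R sf hd d0 (onp n)).2).
rewrite /canon_height /= => /andP [h1 h2].
have -> : limn (hseq f d Q) = limn (fun n => (hx (ec_pow2 f d n Q) : R) / 4 ^+ n) by [].
split; lra.
Qed.

Lemma Nbound (a0 a1 a2 a3 d x y x' y' M : int) :
  d * y^+2 = a3 * x^+3 + a2 * x^+2 + a1 * x + a0 ->
  d * y'^+2 = a3 * x'^+3 + a2 * x'^+2 + a1 * x' + a0 ->
  `|x| <= M -> `|x'| <= M -> 1 <= M ->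
  `|d * (y' - y)^+2 - (a2 + a3 * (x + x')) * (x' - x)^+2|
     <= 16 * (`|a0| + `|a1| + `|a2| + `|a3|) * M^+3 /\
  `|a3 * (x' - x)^+2| <= 16 * (`|a0| + `|a1| + `|a2| + `|a3|) * M^+3.
Proof.
move=> e1 e2 hx hx' M1.
set S := `|a0| + `|a1| + `|a2| + `|a3|.
have S0 : 0 <= S by rewrite /S !addr_ge0.
have h1 : `|1 : int| <= M by rewrite normr1.
have fb (z : int) : `|z| <= M -> `|a3 * z^+3 + a2 * z^+2 + a1 * z + a0| <= S * M^+3.
  move=> hz; have := form3_le a0 a1 a2 a3 hz h1.
  have -> : form3 a0 a1 a2 a3 z 1 = a3 * z^+3 + a2 * z^+2 + a1 * z + a0.
    by rewrite /form3 !expr1n !mulr1; ring.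
  by [].
have f1 := fb x hx; have f2 := fb x' hx'.
rewrite -e1 in f1; rewrite -e2 in f2.
have M3 : 0 <= M ^+ 3 by rewrite exprn_ge0 //; lia.
set T := S * M ^+ 3 in f1 f2 *.
have t1 : `|d * (y' - y)^+2| <= 4 * T.
  have : `|d * (y' - y)^+2| <= 2 * `|d * y^+2| + 2 * `|d * y'^+2|.
    have E0 : `|d * (y' - y)^+2| = `|d| * (y' - y)^+2 by rewrite normrM (ger0_norm (sqr_ge0 _)).
    have E1 : `|d * y^+2| = `|d| * y^+2 by rewrite normrM (ger0_norm (sqr_ge0 _)).
    have E2 : `|d * y'^+2| = `|d| * y'^+2 by rewrite normrM (ger0_norm (sqr_ge0 _)).
    rewrite E0 E1 E2.
    have : 0 <= `|d| by []. have : 0 <= (y' + y)^+2 by rewrite sqr_ge0.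
    move: (`|d|) => D; clear; nia.
  clear -f1 f2; lia.
have ha : `|a2| <= S by rewrite /S; clear; lia.
have hb : `|a3| <= S by rewrite /S; clear; lia.
have t2 : `|(a2 + a3 * (x + x')) * (x' - x)^+2| <= 12 * T.
  have u1 : `|a2 + a3 * (x + x')| <= 3 * S * M.
    have h3 : `|a3 * (x + x')| <= S * (2 * M).
      rewrite normrM; apply: ler_pM => //; clear -hx hx'; lia.
    have SM : S <= S * M by clear -S0 M1; nia.
    apply: le_trans (ler_normD _ _) _.
    have -> : 3 * S * M = S * M + S * (2 * M) by ring.
    apply: lerD => //; exact: le_trans ha SM.
  have u2 : `|(x' - x)^+2| <= 4 * M^+2.
    rewrite normrX; have : `|x' - x| <= 2 * M by clear -hx hx'; lia.
    have : 0 <= `|x' - x| by [].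
    move: (`|x' - x|) => t t0 h; clear -t0 h; nia.
  rewrite normrM /T.
  have : `|a2 + a3 * (x + x')| * `|(x' - x) ^+ 2| <= 3 * S * M * (4 * M^+2).
    by apply: ler_pM.
  have -> : 3 * S * M * (4 * M ^+ 2) = 12 * (S * M^+3) by rewrite (exprS M 2); ring.
  by [].
split.
  apply: le_trans (ler_normB _ _) _.
  have -> : 16 * S * M ^+ 3 = 4 * T + 12 * T by rewrite /T; ring.
  exact: lerD.
have k1 : `|a3 * (x' - x)^+2| <= S * (4 * M^+2).
  rewrite normrM; apply: ler_pM => //.
  rewrite normrX; have : `|x' - x| <= 2 * M by clear -hx hx'; lia.
  have : 0 <= `|x' - x| by [].
  move: (`|x' - x|) => t t0 h; clear -t0 h; nia.
have M23 : M^+2 <= M^+3.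
  have : 0 <= M^+2 by rewrite sqr_ge0.
  rewrite (exprS M 2); move: (M^+2) => t t0; clear -t0 M1; nia.
have k2 : S * (4 * M^+2) <= 16 * T.
  rewrite /T; move: M23; have : 0 <= M^+2 by rewrite sqr_ge0.
  move: (M^+2) (M^+3) => t u t0 tu; clear -S0 t0 tu; nia.
apply: le_trans k1 _; apply: le_trans k2 _; by rewrite /T mulrA.
Qed.


Lemma add_alg (c2 c3 D X Y X' Y' : rat) : c3 != 0 -> X != X' ->
  (D * ((Y' - Y) / (X' - X)) ^+ 2 - c2) / c3 - X - X' =
  (D * (Y' - Y)^+2 - (c2 + c3 * (X + X')) * (X' - X)^+2) / (c3 * (X' - X)^+2).
Proof.
move=> c30 ne; have nz : X' - X != 0 by rewrite subr_eq0 eq_sym.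
by field; rewrite c30 nz.
Qed.

Lemma add_int_x (f : {poly int}) (d x y x' y' : int) : size f = 4%N -> x != x' ->
  f`_3 * (x' - x)^+2 != 0 /\ exists y3, ec_add f d (ipt x y) (ipt x' y') =
    Some ((d * (y' - y)^+2 - (f`_2 + f`_3 * (x + x')) * (x' - x)^+2)%:~R /
          (f`_3 * (x' - x)^+2)%:~R, y3).
Proof.
move=> sf ne; have a30 := a3_neq0 sf.
have nz : x' - x != 0 by rewrite subr_eq0 eq_sym.
split; first by rewrite mulf_neq0 // expf_neq0.
have ne' : (x%:~R == x'%:~R :> rat) = false by rewrite eqr_int (negbTE ne).
rewrite /ec_add /ipt ne' /ec_third; eexists; congr Some; congr pair.
rewrite add_alg; last by rewrite eqr_int.
  by rewrite !(rmorphB, rmorphD, rmorphM, rmorphXn).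
by rewrite intr_eq0.
Qed.

Lemma on_ipt (f : {poly int}) (d x y : int) : d * y ^+ 2 = f.[x] -> on_curve f d (ipt x y).
Proof.
move=> h; rewrite /on_curve /ipt /fQ horner_map /= -h.
by rewrite rmorphM rmorphXn.
Qed.

Lemma hx_ipt (R : realType) (x y : int) : (hx (ipt x y) : R) = ln ((Num.max `|x| 1)%:~R).
Proof. by rewrite /hx /ipt numq_int denq_int. Qed.

Definition Sf (f : {poly int}) : int := `|f`_0| + `|f`_1| + `|f`_2| + `|f`_3|.

Unset Implicit Arguments.

Theorem lemma4p17 (R : realType) (f : {poly int}) :
  size f = 4%N -> cubic_disc f != 0 ->
  exists C : R, forall (d : int), squarefree_int d ->
    forall x y x' y' : int,
      d * y ^+ 2 = f.[x] -> d * y' ^+ 2 = f.[x'] -> (x, y) <> (x', y') ->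
      canon_height f d (ec_add f d (ipt x y) (ipt x' y')) <=
        3 * Num.max (canon_height f d (ipt x y)) (canon_height f d (ipt x' y')) + C.
Proof.
move=> sf hd.
pose c : R := cstf R f.
set L := ln ((Num.max 1 (16 * Sf f))%:~R : R).
exists (L / 2 + 2 * c / 3).
move=> d [d0 _] x y x' y' e e' neq.
have L0 : 0 <= L by exact: lnmax_ge0.
have a30 := a3_neq0 sf.
have hP := on_ipt e; have hP' := on_ipt e'.
have hS := on_add sf a30 d0 hP hP'.
have [bP1 bP2] := ch_bounds R sf hd d0 hP.
have [bQ1 bQ2] := ch_bounds R sf hd d0 hP'.
have [bS1 bS2] := ch_bounds R sf hd d0 hS.
rewrite !hx_ipt -/c in bP1 bP2 bQ1 bQ2.
rewrite -/c in bS1 bS2.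
have lx0 : 0 <= ln ((Num.max `|x| 1)%:~R : R) by apply: ln_ge0i; rewrite le_max lexx orbT.
have lx0' : 0 <= ln ((Num.max `|x'| 1)%:~R : R) by apply: ln_ge0i; rewrite le_max lexx orbT.
have c0 : 0 <= c.
  have := lnmax_ge0 R (K1 f`_0 f`_1 f`_2 f`_3); have := lnmax_ge0 R (K2 f`_0 f`_1 f`_2 f`_3).
  have := lnmax_ge0 R (RB f`_0 f`_1 f`_2 f`_3); rewrite /c /cstf; lra.
have mP : @canon_height R f d (ipt x y) <= Num.max (@canon_height R f d (ipt x y)) (@canon_height R f d (ipt x' y')).
  by rewrite le_max lexx.
have mP' : @canon_height R f d (ipt x' y') <= Num.max (@canon_height R f d (ipt x y)) (@canon_height R f d (ipt x' y')).
  by rewrite le_max lexx orbT.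
move: mP mP'; set mx := Num.max _ _ => mP mP'.
case: (eqVneq x x') => [ex|nx].
  have yy : y + y' = 0.
    subst x'; have : d * (y ^+ 2 - y' ^+ 2) = 0 by rewrite mulrBr e e' subrr.
    move/eqP; rewrite mulf_eq0 (negbTE d0) /= subr_eq0 eqf_sqr => /orP [/eqP yq|/eqP yq].
      by exfalso; apply: neq; rewrite yq.
    by rewrite yq addNr.
  have eN : ec_add f d (ipt x y) (ipt x' y') = None.
    rewrite /ec_add /ipt ex eqxx.
    have -> : (y%:~R + y'%:~R == 0 :> rat) by rewrite -rmorphD yy.
    by [].
  rewrite eN in bS1 bS2 *; move: bS2; rewrite /= mul0r => bS2.
  rewrite -/c in bS2; lra.
have [Dn0 [y3 eS]] := add_int_x d y y' sf nx.
rewrite eS in bS1 bS2 *.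
move: Dn0 eS; set N := (d * _ - _); set Dn := (f`_3 * _) => Dn0 eS.
have [k [k0 eN eD]] := @quot N Dn Dn0.
move: bS2; rewrite /hx.
set x3 := (N%:~R / Dn%:~R : rat) in eN eD *.
set H3 := Num.max `|numq x3| (denq x3).
set M := Num.max (Num.max `|x| 1) (Num.max `|x'| 1).
have M1 : 1 <= M by rewrite /M !le_max lexx !orbT.
have hx1 : `|x| <= M by rewrite /M !le_max lexx.
have hx1' : `|x'| <= M by rewrite /M !le_max lexx !orbT.
have e1 : d * y ^+ 2 = f`_3 * x ^+ 3 + f`_2 * x ^+ 2 + f`_1 * x + f`_0 by rewrite e evalZ.
have e1' : d * y' ^+ 2 = f`_3 * x' ^+ 3 + f`_2 * x' ^+ 2 + f`_1 * x' + f`_0 by rewrite e' evalZ.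
have [nb db] := Nbound e1 e1' hx1 hx1' M1.
rewrite -/N -/Dn in nb db.
have H31 : 1 <= H3 by exact: Hq_ge1.
have M31 : 1 <= M ^+ 3 by rewrite exprn_ege1.
have H3b : H3 <= 16 * Sf f * M ^+ 3.
  have hn : `|numq x3| <= `|N| by rewrite eN normrM; clear -k0; have := normr_ge0 (numq x3); nia.
  have hd3 : denq x3 <= `|Dn| by rewrite eD normrM (gtr0_norm (denq_gt0 x3)); clear -k0; have := denq_gt0 x3; nia.
  rewrite /H3 ge_max; apply/andP; split.
    by apply: le_trans hn _; rewrite /Sf.
  by apply: le_trans hd3 _; rewrite /Sf.
have lH := lnle R H31 M31 (_ : H3 <= (16 * Sf f) * M ^+ 3).
rewrite lnXi // -/L in lH.
move=> bS2; have lH' := lH H3b.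
have lM : ln (M%:~R : R) = ln ((Num.max `|x| 1)%:~R) \/ ln (M%:~R : R) = ln ((Num.max `|x'| 1)%:~R).
  by rewrite /M; case: (leP (Num.max `|x| 1) (Num.max `|x'| 1)) => _; [right|left].
case: lM => lM; rewrite lM in lH'; lra.
Qed.
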